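(* Let $(S,K,I)$ be a split graph and let $v_1\ldots v_n$, with $n\geq 2$, be an induced path in the factor graph $\Phi(S)$. If $\sigma_{i,i+1}=1$ for some $i\in[n-1]$, then $i\in\{1,n-1\}$.
   Context: A split graph $(S,K,I)$ is a graph $S$ together with a fixed partition $V(S)=K\dot\cup I$, where $K$ is a clique and $I$ is an independent set. For a vertex $v$ of $S$, $N_v$ denotes its open neighborhood in $S$ and $d_v=|N_v|$; $\eta_{uv}=|N_u\cap N_v|$. The factor graph $\Phi(S)$ is the loopless multigraph with vertex set $I$ in which, for distinct $u,v\in I$, there is one edge joining $u$ and $v$ for each 2-switch of $S$ acting on $u$ and $v$ (a 2-switch replaces edges $ab,cd$ with $ac,bd$ when $ab,cd\in E(S)$ and $ac,bd\notin E(S)$); equivalently, the multiplicity of $uv$ is $\sigma_{uv}=(d_u-\eta_{uv})(d_v-\eta_{uv})$, and $u,v$ are adjacent iff $\sigma_{uv}>0$; $\sigma_{i,i+1}$ denotes $\sigma_{v_iv_{i+1}}$. An induced path in $\Phi(S)$ consists of distinct vertices with consecutive ones adjacent and no other pair adjacent (multiplicities ignored). *)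

(* Defs.v *)
From mathcomp Require Import all_boot.
Set Implicit Arguments. Unset Strict Implicit. Unset Printing Implicit Defensive.

Definition simple_graph (T : finType) (e : rel T) : Prop :=
  symmetric e /\ irreflexive e.

Definition split_graph (T : finType) (e : rel T) (K I : {set T}) : Prop :=
  [/\ simple_graph e,
      K :&: I = set0,
      K :|: I = [set: T],
      (forall x y, x \in K -> y \in K -> x != y -> e x y) &
      (forall x y, x \in I -> y \in I -> ~~ e x y)].

Definition nbhd (T : finType) (e : rel T) (v : T) : {set T} := [set w | e v w].
Definition deg (T : finType) (e : rel T) (v : T) : nat := #|nbhd e v|.
Definition eta (T : finType) (e : rel T) (u v : T) : nat :=
  #|nbhd e u :&: nbhd e v|.

(* multiplicity of the edge uv in the factor graph Phi(S) *)
Definition sigma (T : finType) (e : rel T) (u v : T) : nat :=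
  (deg e u - eta e u v) * (deg e v - eta e u v).

Definition phi_adj (T : finType) (e : rel T) (I : {set T}) (u v : T) : bool :=
  [&& u \in I, v \in I, u != v & 0 < sigma e u v].

Definition induced_path (T : finType) (e : rel T) (I : {set T})
    (n : nat) (v : nat -> T) : Prop :=
  [/\ (forall i, 1 <= i <= n -> v i \in I),
      (forall i j, 1 <= i <= n -> 1 <= j <= n -> v i = v j -> i = j),
      (forall i, 1 <= i < n -> phi_adj e I (v i) (v i.+1)) &
      (forall i j, 1 <= i <= n -> 1 <= j <= n -> i.+1 < j ->
          ~~ phi_adj e I (v i) (v j))].

(* Main.v *)
Require Import Defs.
From mathcomp Require Import all_boot.
From mathcomp Require Import zify.
Set Implicit Arguments. Unset Strict Implicit. Unset Printing Implicit Defensive.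

Lemma sigmaE (T : finType) (e : rel T) x y :
  sigma e x y = #|nbhd e x :\: nbhd e y| * #|nbhd e y :\: nbhd e x|.
Proof.
rewrite /sigma /deg /eta -(cardsID (nbhd e y) (nbhd e x)) addKn.
by rewrite -(cardsID (nbhd e x) (nbhd e y)) setIC addKn.
Qed.

Lemma key (T : finType) (A B C : {set T}) a b :
  A :\: B = [set a] -> B :\: A = [set b] ->
  0 < #|C :\: A| * #|A :\: C| -> #|C :\: B| * #|B :\: C| = 0 ->
  a \notin C /\ b \in C.
Proof.
move=> hab hba; rewrite muln_gt0 => /andP[h1 h2] /eqP; rewrite muln_eq0.
have ha : a \in A :\: B by rewrite hab set11.
have hb : b \in B :\: A by rewrite hba set11.
move: ha hb; rewrite !inE => /andP[naB aA] /andP[nbA bB].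
case/orP; rewrite cards_eq0 setD_eq0 => hs.
- have aC : a \notin C by apply/negP => /(subsetP hs); rewrite (negbTE naB).
  split => //.
  case/card_gt0P: h1 => x; rewrite inE => /andP[xA xC].
  have : x \in B :\: A by rewrite inE xA (subsetP hs).
  by rewrite hba => /set1P hx; rewrite -hx.
- split; last exact: (subsetP hs).
  case/card_gt0P: h2 => x; rewrite inE => /andP[xC xA].
  have : x \in A :\: B.
    by rewrite inE xA andbT; apply/negP => /(subsetP hs); rewrite (negbTE xC).
  by rewrite hab => /set1P hx; rewrite -hx.
Qed.

Lemma nonadj_sigma (T : finType) (e : rel T) (I : {set T}) x y :
  x \in I -> y \in I -> x != y -> ~~ phi_adj e I x y -> sigma e x y = 0.
Proof.
rewrite /phi_adj => -> -> -> /=; rewrite lt0n negbK => /eqP //.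
Qed.

Theorem corollary4p6 (T : finType) (e : rel T) (K I : {set T})
    (n : nat) (v : nat -> T) :
  split_graph e K I ->
  2 <= n ->
  induced_path e I n v ->
  forall i, 1 <= i <= n.-1 ->
    sigma e (v i) (v i.+1) = 1 ->
    i = 1 \/ i = n.-1.
Proof.
move=> _ hn [hI hinj hadj hnon] i hi hs.
case: (i =P 1) => [|h1]; first by left.
case: (i =P n.-1) => [|h2]; first by right.
exfalso.
have hi1 : 2 <= i <= n.-2 by lia.
set A := nbhd e (v i); set B := nbhd e (v i.+1);
set C := nbhd e (v i.-1); set D := nbhd e (v i.+2).
have neq : forall p q, 1 <= p <= n -> 1 <= q <= n -> p != q -> v p != v q.
  by move=> p q hp hq; apply: contra => /eqP /(hinj _ _ hp hq) ->.
have na : forall p q, 1 <= p <= n -> 1 <= q <= n -> p.+1 < q ->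
    sigma e (v p) (v q) = 0.
  move=> p q hp hq hpq; apply: (nonadj_sigma (I:=I)); try by apply: hI.
    by apply: neq => //; lia.
  by apply: hnon.
have ad : forall p, 1 <= p < n -> 0 < sigma e (v p) (v p.+1).
  by move=> p hp; case/and4P: (hadj p hp).
move: hs; rewrite sigmaE -/A -/B => /eqP; rewrite muln_eq1 => /andP[s1 s2].
case: (cards1P s1) => a ha; case: (cards1P s2) => b hb.
have sCA := ad i.-1 ltac:(lia); rewrite prednK in sCA; last by lia.
rewrite sigmaE -/A -/C in sCA.
have sCB := na i.-1 i.+1 ltac:(lia) ltac:(lia) ltac:(lia).
rewrite sigmaE -/B -/C in sCB.
have [aC bC] := key ha hb sCA sCB.
have sBD := ad i.+1 ltac:(lia); rewrite sigmaE -/B -/D mulnC in sBD.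
have sAD := na i i.+2 ltac:(lia) ltac:(lia) ltac:(lia).
rewrite sigmaE -/A -/D mulnC in sAD.
have [bD aD] := key hb ha sBD sAD.
have sCD := na i.-1 i.+2 ltac:(lia) ltac:(lia) ltac:(lia).
move: sCD; rewrite sigmaE -/C -/D => /eqP; rewrite muln_eq0.
case/orP; rewrite cards_eq0 setD_eq0 => /subsetP hs.
- by move: (hs _ bC); rewrite (negbTE bD).
- by move: (hs _ aD); rewrite (negbTE aC).
Qed.
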